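(* Let $\mathcal{H}$ be a Hilbert superspace of parity $n\in\mathbb{Z}_2$, and let $J_1,J_2$ be two fundamental symmetries for $\mathcal{H}$. Then the Hilbert-space topologies on $\mathcal{H}$ defined by the positive definite scalar products $(x,y)_{J_1}=\langle x,J_1(y)\rangle$ and $(x,y)_{J_2}=\langle x,J_2(y)\rangle$ coincide. Consequently, the algebra $\mathcal{B}(\mathcal{H})$ of continuous endomorphisms of $\mathcal{H}$ does not depend on the choice of fundamental symmetry.
   Context: A complex $\mathbb{Z}_2$-graded vector space is $\mathcal{H}=\mathcal{H}_0\oplus\mathcal{H}_1$; $|x|\in\mathbb{Z}_2$ denotes the degree of a homogeneous element $x$. A sesquilinear form $\langle-,-\rangle$ (antilinear in the first variable) is superhermitian if $\overline{\langle x,y\rangle}=(-1)^{|x||y|}\langle y,x\rangle$ for homogeneous $x,y$. It is homogeneous of degree $n$ if $\langle x,y\rangle=0$ whenever $|x|+|y|\neq n$. A Hilbert superspace of parity $n\in\mathbb{Z}_2$ is a complex $\mathbb{Z}_2$-graded vector space $\mathcal{H}$ with a superhermitian sesquilinear inner product $\langle-,-\rangle$, homogeneous of degree $n$, for which there exists a fundamental symmetry. A fundamental symmetry is an endomorphism $J$ of $\mathcal{H}$, homogeneous of degree $n$, with the following properties for all homogeneous $x,y$: - $J^2(x)=(-1)^{(n+1)|x|}x$; - $\langle J(x),J(y)\rangle=\langle x,y\rangle$; - $(x,y)_J:=\langle x,J(y)\rangle$ is a hermitian positive definite scalar product for which $\mathcal{H}$ is complete. *)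

(* Defs.v *)
From Stdlib Require Export Reals.
Open Scope R_scope.

Record Cx := mkC { Re : R; Im : R }.
Definition C0 : Cx := mkC 0 0.
Definition C1 : Cx := mkC 1 0.
Definition Cadd (a b : Cx) : Cx := mkC (Re a + Re b) (Im a + Im b).
Definition Copp (a : Cx) : Cx := mkC (- Re a) (- Im a).
Definition Cmul (a b : Cx) : Cx :=
  mkC (Re a * Re b - Im a * Im b) (Re a * Im b + Im a * Re b).
Definition Cconj (a : Cx) : Cx := mkC (Re a) (- Im a).

Record CVS := {
  vcar :> Type;
  vadd : vcar -> vcar -> vcar;
  vzero : vcar;
  vopp : vcar -> vcar;
  vscal : Cx -> vcar -> vcar;
  vaddA : forall x y z, vadd x (vadd y z) = vadd (vadd x y) z;
  vaddC : forall x y, vadd x y = vadd y x;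
  vadd0 : forall x, vadd x vzero = x;
  vaddN : forall x, vadd x (vopp x) = vzero;
  vscal1 : forall x, vscal C1 x = x;
  vscalA : forall a b x, vscal a (vscal b x) = vscal (Cmul a b) x;
  vscalDv : forall a x y, vscal a (vadd x y) = vadd (vscal a x) (vscal a y);
  vscalDc : forall a b x, vscal (Cadd a b) x = vadd (vscal a x) (vscal b x)
}.

Arguments vadd {_}. Arguments vzero {_}. Arguments vopp {_}. Arguments vscal {_}.

(* ---------- Z2-graded complex vector spaces: H = H_0 (+) H_1 ----------
   Degrees in Z2 are represented by bool (false = 0, true = 1, addition = xorb).
   [homog d x] means x lies in H_d. *)
Record GradedCVS := {
  gvs :> CVS;
  homog : bool -> gvs -> Prop;
  homog0 : forall d, homog d vzero;
  homogD : forall d x y, homog d x -> homog d y -> homog d (vadd x y);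
  homogZ : forall d a x, homog d x -> homog d (vscal a x);
  homog_decomp : forall x, exists x0 x1,
      homog false x0 /\ homog true x1 /\ x = vadd x0 x1;
  homog_disj : forall x, homog false x -> homog true x -> x = vzero
}.

Arguments homog {_}.

Section Defs.
Variable H : GradedCVS.

Definition is_linear (T : H -> H) : Prop :=
  (forall x y, T (vadd x y) = vadd (T x) (T y)) /\
  (forall a x, T (vscal a x) = vscal a (T x)).

Definition is_sesquilinear (form : H -> H -> Cx) : Prop :=
  (forall x y z, form (vadd x y) z = Cadd (form x z) (form y z)) /\
  (forall a x z, form (vscal a x) z = Cmul (Cconj a) (form x z)) /\
  (forall x y z, form x (vadd y z) = Cadd (form x y) (form x z)) /\
  (forall a x y, form x (vscal a y) = Cmul a (form x y)).

(* (-1)^(a*b) *)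
Definition zsign (b : bool) : Cx := if b then Copp C1 else C1.

Definition is_superhermitian (form : H -> H -> Cx) : Prop :=
  forall a b x y, homog a x -> homog b y ->
    Cconj (form x y) = Cmul (zsign (andb a b)) (form y x).

Definition form_homogeneous_of_degree (n : bool) (form : H -> H -> Cx) : Prop :=
  forall a b x y, homog a x -> homog b y -> xorb a b <> n -> form x y = C0.

Definition normJ (form : H -> H -> Cx) (J : H -> H) (x : H) : R :=
  sqrt (Re (form x (J x))).
Definition distJ (form : H -> H -> Cx) (J : H -> H) (x y : H) : R :=
  normJ form J (vadd x (vopp y)).

Definition completeJ (form : H -> H -> Cx) (J : H -> H) : Prop :=
  forall u : nat -> H,
    (forall eps, 0 < eps -> exists N, forall p q, (N <= p)%nat -> (N <= q)%nat ->
        distJ form J (u p) (u q) < eps) ->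
    exists l : H, forall eps, 0 < eps -> exists N, forall p, (N <= p)%nat ->
        distJ form J (u p) l < eps.

Definition is_fundamental_symmetry (n : bool) (form : H -> H -> Cx) (J : H -> H)
  : Prop :=
  is_linear J /\
  (forall a x, homog a x -> homog (xorb a n) (J x)) /\
  (* J^2 x = (-1)^((n+1)|x|) x *)
  (forall a x, homog a x ->
     J (J x) = if andb (negb n) a then vopp x else x) /\
  (forall a b x y, homog a x -> homog b y -> form (J x) (J y) = form x y) /\
  (forall x y, Cconj (form x (J y)) = form y (J x)) /\
  (forall x, x <> vzero -> 0 < Re (form x (J x))) /\
  completeJ form J.

Definition is_Hilbert_superspace (n : bool) (form : H -> H -> Cx) : Prop :=
  is_sesquilinear form /\ is_superhermitian form /\
  form_homogeneous_of_degree n form /\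
  exists J, is_fundamental_symmetry n form J.

Definition is_openJ (form : H -> H -> Cx) (J : H -> H) (U : H -> Prop) : Prop :=
  forall x, U x -> exists eps, 0 < eps /\
    forall y, distJ form J y x < eps -> U y.

Definition continuousJ (form : H -> H -> Cx) (J : H -> H) (T : H -> H) : Prop :=
  forall x eps, 0 < eps -> exists delta, 0 < delta /\
    forall y, distJ form J y x < delta -> distJ form J (T y) (T x) < eps.

End Defs.

(* Main.v *)
Require Import Defs.
From Stdlib Require Import Reals Lra Lia Classical ClassicalEpsilon Arith ZArith.
Open Scope R_scope.

Lemma nat_unbounded (x : R) : exists m : nat, x < INR m.
Proof.
  destruct (archimed x) as [h1 _].
  destruct (Z_le_gt_dec 0 (up x)) as [hz|hz].
  - exists (Z.to_nat (up x)). rewrite INR_IZR_INZ, Z2Nat.id by exact hz. lra.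
  - exists 0%nat. simpl. assert (hz2 : (up x < 0)%Z) by lia. apply IZR_lt in hz2. lra.
Qed.

Lemma v_cancel (V : CVS) (a b c : V) : vadd a b = vadd a c -> b = c.
Proof.
  intros E.
  transitivity (vadd (vadd a b) (vopp a)).
  - rewrite (vaddC V a b), <- vaddA, vaddN, vadd0. reflexivity.
  - rewrite E, (vaddC V a c), <- vaddA, vaddN, vadd0. reflexivity.
Qed.

Lemma vopp_uniq (V : CVS) (a b : V) : vadd a b = vzero -> b = vopp a.
Proof. intros E. apply (v_cancel V a). rewrite vaddN. exact E. Qed.

Lemma vopp_opp (V : CVS) (a : V) : vopp (vopp a) = a.
Proof. symmetry. apply vopp_uniq. rewrite vaddC, vaddN. reflexivity. Qed.

Lemma vadd0l (V : CVS) (a : V) : vadd vzero a = a.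
Proof. rewrite vaddC. apply vadd0. Qed.

Lemma vopp_add (V : CVS) (a b : V) : vopp (vadd a b) = vadd (vopp a) (vopp b).
Proof.
  symmetry. apply vopp_uniq.
  rewrite <- vaddA, (vaddC V (vopp a) (vopp b)), (vaddA V b (vopp b)), vaddN, vadd0l, vaddN.
  reflexivity.
Qed.

Lemma sub_triangle (V : CVS) (a b c : V) :
  vadd a (vopp b) = vadd (vadd a (vopp c)) (vadd c (vopp b)).
Proof. rewrite <- vaddA, (vaddA V (vopp c) c), (vaddC V (vopp c) c), vaddN, vadd0l. reflexivity. Qed.

Lemma sub_swap (V : CVS) (a b : V) : vadd a (vopp b) = vopp (vadd b (vopp a)).
Proof. rewrite vopp_add, vopp_opp, vaddC. reflexivity. Qed.

Lemma add_sub (V : CVS) (c z : V) : vadd (vadd c z) (vopp c) = z.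
Proof. rewrite (vaddC V c z), <- vaddA, vaddN, vadd0. reflexivity. Qed.

Lemma sub_add (V : CVS) (x y : V) : vadd x (vadd y (vopp x)) = y.
Proof. rewrite vaddA, (vaddC V x y), <- vaddA, vaddN, vadd0. reflexivity. Qed.

Lemma lin0 (H : GradedCVS) (J : H -> H) : is_linear H J -> J vzero = vzero.
Proof.
  intros [hA _]. apply (v_cancel _ (J vzero)). rewrite <- hA, !vadd0. reflexivity.
Qed.

Lemma linN (H : GradedCVS) (J : H -> H) x : is_linear H J -> J (vopp x) = vopp (J x).
Proof.
  intros hl. apply vopp_uniq. destruct hl as [hA hZ] eqn:e. rewrite <- hA, vaddN. apply lin0; assumption.
Qed.

Lemma lin_surj (H : GradedCVS) n form (J : H -> H) :
  is_fundamental_symmetry H n form J -> forall w, exists v, J v = w.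
Proof.
  intros (hl & _ & hJJ & _).
  assert (one : forall a w, homog a w -> exists v, J v = w).
  { intros a w hw. specialize (hJJ a w hw). destruct (negb n && a)%bool.
    - exists (J (vopp w)). rewrite (linN _ _ w hl), (linN _ _ (J w) hl), hJJ, vopp_opp. reflexivity.
    - exists (J w). exact hJJ. }
  intros w. destruct (homog_decomp H w) as (w0 & w1 & h0 & h1 & ->).
  destruct (one _ _ h0) as [v0 e0]. destruct (one _ _ h1) as [v1 e1].
  exists (vadd v0 v1). destruct hl as [hA _]. rewrite hA, e0, e1. reflexivity.
Qed.

Definition gJ (H : GradedCVS) (form : H -> H -> Cx) (J : H -> H) (x y : H) : R :=
  Re (form x (J y)).
Definition rsc (H : GradedCVS) (t : R) (x : H) : H := vscal (mkC t 0) x.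


Lemma g_addl H n form J x y z : is_sesquilinear H form -> is_fundamental_symmetry H n form J ->
  gJ H form J (vadd x y) z = gJ H form J x z + gJ H form J y z.
Proof. intros (h1 & h2 & h3 & h4) _. unfold gJ. rewrite h1. reflexivity. Qed.

Lemma g_addr H n form J x y z : is_sesquilinear H form -> is_fundamental_symmetry H n form J ->
  gJ H form J x (vadd y z) = gJ H form J x y + gJ H form J x z.
Proof. intros (h1 & h2 & h3 & h4) ((hA & hZ) & _). unfold gJ. rewrite hA, h3. reflexivity. Qed.

Lemma g_scl H n form J t x z : is_sesquilinear H form -> is_fundamental_symmetry H n form J ->
  gJ H form J (rsc H t x) z = t * gJ H form J x z.
Proof. intros (h1 & h2 & h3 & h4) _. unfold gJ, rsc. rewrite h2. simpl. ring. Qed.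

Lemma g_scr H n form J t x z : is_sesquilinear H form -> is_fundamental_symmetry H n form J ->
  gJ H form J x (rsc H t z) = t * gJ H form J x z.
Proof. intros (h1 & h2 & h3 & h4) ((hA & hZ) & _). unfold gJ, rsc. rewrite hZ, h4. simpl. ring. Qed.

Lemma g_sym H n form J x y : is_sesquilinear H form -> is_fundamental_symmetry H n form J ->
  gJ H form J x y = gJ H form J y x.
Proof. intros _ (_ & _ & _ & _ & hh & _). unfold gJ. rewrite <- hh. reflexivity. Qed.

Lemma g_0l H n form J z : is_sesquilinear H form -> is_fundamental_symmetry H n form J ->
  gJ H form J vzero z = 0.
Proof. intros hs hf. pose proof (g_addl H n form J vzero vzero z hs hf) as h. rewrite vadd0 in h. lra. Qed.

Lemma g_oppl H n form J x z : is_sesquilinear H form -> is_fundamental_symmetry H n form J ->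
  gJ H form J (vopp x) z = - gJ H form J x z.
Proof. intros hs hf. pose proof (g_addl H n form J x (vopp x) z hs hf) as h.
  rewrite vaddN, (g_0l H n form J z hs hf) in h. lra. Qed.

Lemma g_nonneg H n form J x : is_sesquilinear H form -> is_fundamental_symmetry H n form J ->
  0 <= gJ H form J x x.
Proof. intros hs hf. destruct (classic (x = vzero)) as [->|hx].
  - rewrite (g_0l H n form J _ hs hf). lra.
  - destruct hf as (_ & _ & _ & _ & _ & hp & _). left. apply hp, hx. Qed.

Lemma g_def H n form J x : is_sesquilinear H form -> is_fundamental_symmetry H n form J ->
  gJ H form J x x = 0 -> x = vzero.
Proof. intros hs hf e. apply NNPP. intro hx. destruct hf as (_ & _ & _ & _ & _ & hp & _).
  specialize (hp x hx). unfold gJ in e. lra. Qed.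

Lemma quad (a b c : R) : 0 <= a -> 0 <= c ->
  (forall t, 0 <= a + 2*t*b + t*t*c) -> b*b <= a*c.
Proof.
  intros ha hc h. destruct (Req_dec c 0) as [c0|cn].
  - subst c. destruct (Req_dec b 0) as [->|bn]; [lra|].
    specialize (h (-(a+1)/(2*b))).
    replace (a + 2 * (- (a + 1) / (2 * b)) * b + - (a + 1) / (2 * b) * (- (a + 1) / (2 * b)) * 0)
      with (-1) in h by (field; exact bn). lra.
  - specialize (h (-b/c)).
    replace (a + 2 * (- b / c) * b + - b / c * (- b / c) * c) with ((a*c - b*b)/c) in h
      by (field; exact cn).
    assert (0 < c) by lra.
    assert (0 <= a*c - b*b); [|lra].
    replace (a*c - b*b) with ((a*c - b*b)/c * c) by (field; lra).
    apply Rmult_le_pos; lra.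
Qed.

Definition NJ (H : GradedCVS) form (J : H -> H) x := normJ H form J x.

Lemma N_sq H n form J x : is_sesquilinear H form -> is_fundamental_symmetry H n form J ->
  normJ H form J x * normJ H form J x = gJ H form J x x.
Proof. intros hs hf. unfold normJ. apply sqrt_sqrt. apply (g_nonneg H n form J x hs hf). Qed.

Lemma N_pos H form J x : 0 <= normJ H form J x.
Proof. apply sqrt_pos. Qed.

Lemma CS H n form J x y : is_sesquilinear H form -> is_fundamental_symmetry H n form J ->
  gJ H form J x y <= normJ H form J x * normJ H form J y.
Proof.
  intros hs hf.
  assert (q : gJ H form J x y * gJ H form J x y <= gJ H form J x x * gJ H form J y y).
  { apply quad; try apply (g_nonneg H n form J _ hs hf).
    intros t. pose proof (g_nonneg H n form J (vadd x (rsc H t y)) hs hf) as h.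
    rewrite (g_addl H n form J _ _ _ hs hf), !(g_addr H n form J _ _ _ hs hf),
      !(g_scl H n form J _ _ _ hs hf), !(g_scr H n form J _ _ _ hs hf),
      (g_sym H n form J y x hs hf) in h. lra. }
  rewrite <- (N_sq H n form J x hs hf), <- (N_sq H n form J y hs hf) in q.
  pose proof (N_pos H form J x). pose proof (N_pos H form J y).
  set (P := normJ H form J x * normJ H form J y) in *.
  assert (hP : 0 <= P) by (apply Rmult_le_pos; assumption).
  assert (q2 : gJ H form J x y * gJ H form J x y <= P * P) by (unfold P; nra).
  destruct (Rle_dec (gJ H form J x y) P) as [ok|ko]; [exact ok|].
  exfalso. apply Rnot_le_lt in ko. nra.
Qed.

Lemma CS' H n form J x y : is_sesquilinear H form -> is_fundamental_symmetry H n form J ->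
  - (normJ H form J x * normJ H form J y) <= gJ H form J x y.
Proof.
  intros hs hf. pose proof (CS H n form J (vopp x) y hs hf) as h.
  rewrite (g_oppl H n form J _ _ hs hf) in h.
  assert (e : normJ H form J (vopp x) = normJ H form J x).
  { unfold normJ. f_equal. fold (gJ H form J (vopp x) (vopp x)). fold (gJ H form J x x).
    rewrite (g_oppl H n form J _ _ hs hf), (g_sym H n form J x (vopp x) hs hf),
      (g_oppl H n form J _ _ hs hf). ring. }
  rewrite e in h. lra.
Qed.

Lemma N_opp H n form J x : is_sesquilinear H form -> is_fundamental_symmetry H n form J ->
  normJ H form J (vopp x) = normJ H form J x.
Proof.
  intros hs hf. unfold normJ. f_equal. fold (gJ H form J (vopp x) (vopp x)). fold (gJ H form J x x).
  rewrite (g_oppl H n form J _ _ hs hf), (g_sym H n form J x (vopp x) hs hf),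
    (g_oppl H n form J _ _ hs hf). ring.
Qed.

Lemma N_tri H n form J x y : is_sesquilinear H form -> is_fundamental_symmetry H n form J ->
  normJ H form J (vadd x y) <= normJ H form J x + normJ H form J y.
Proof.
  intros hs hf.
  pose proof (N_sq H n form J (vadd x y) hs hf) as e.
  rewrite (g_addl H n form J _ _ _ hs hf), !(g_addr H n form J _ _ _ hs hf),
    (g_sym H n form J y x hs hf) in e.
  rewrite <- (N_sq H n form J x hs hf), <- (N_sq H n form J y hs hf) in e.
  pose proof (CS H n form J x y hs hf).
  pose proof (N_pos H form J x). pose proof (N_pos H form J y). pose proof (N_pos H form J (vadd x y)).
  nra.
Qed.

Lemma N_scal H n form J t x : is_sesquilinear H form -> is_fundamental_symmetry H n form J ->
  0 <= t -> normJ H form J (rsc H t x) = t * normJ H form J x.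
Proof.
  intros hs hf ht. unfold normJ. fold (gJ H form J (rsc H t x) (rsc H t x)). fold (gJ H form J x x).
  rewrite (g_scl H n form J _ _ _ hs hf), (g_scr H n form J _ _ _ hs hf), <- Rmult_assoc.
  rewrite sqrt_mult_alt by nra. rewrite sqrt_square by lra. reflexivity.
Qed.

Lemma N_0 H n form J : is_sesquilinear H form -> is_fundamental_symmetry H n form J ->
  normJ H form J vzero = 0.
Proof. intros hs hf. unfold normJ. fold (gJ H form J vzero vzero). rewrite (g_0l H n form J _ hs hf). apply sqrt_0. Qed.

Lemma N_def H n form J x : is_sesquilinear H form -> is_fundamental_symmetry H n form J ->
  normJ H form J x = 0 -> x = vzero.
Proof. intros hs hf e. apply (g_def H n form J x hs hf). rewrite <- (N_sq H n form J x hs hf), e. ring. Qed.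

Lemma N_swap H n form J a b : is_sesquilinear H form -> is_fundamental_symmetry H n form J ->
  normJ H form J (vadd a (vopp b)) = normJ H form J (vadd b (vopp a)).
Proof. intros hs hf. rewrite (sub_swap _ a b). apply (N_opp H n form J _ hs hf). Qed.

Lemma N_tri3 H n form J a b c : is_sesquilinear H form -> is_fundamental_symmetry H n form J ->
  normJ H form J (vadd a (vopp b)) <= normJ H form J (vadd a (vopp c)) + normJ H form J (vadd c (vopp b)).
Proof. intros hs hf. rewrite (sub_triangle _ a b c). apply (N_tri H n form J _ _ hs hf). Qed.

Lemma lsc H n form J1 J2 : is_sesquilinear H form ->
  is_fundamental_symmetry H n form J1 -> is_fundamental_symmetry H n form J2 ->
  forall x k, k < normJ H form J2 x -> exists r, 0 < r /\
    forall y, normJ H form J1 (vadd y (vopp x)) < r -> k < normJ H form J2 y.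
Proof.
  intros hs hf1 hf2 x k hk.
  destruct (Rlt_dec k 0) as [kn|kp].
  { exists 1. split; [lra|]. intros y _. pose proof (N_pos H form J2 y). lra. }
  apply Rnot_lt_le in kp.
  set (a := normJ H form J2 x) in *.
  destruct (lin_surj H n form J1 hf1 (J2 x)) as [w hw].
  set (Nw := normJ H form J1 w).
  assert (hNw : 0 <= Nw) by apply N_pos.
  exists (a*(a-k)/(Nw+1)). split.
  { apply Rdiv_lt_0_compat; [nra|lra]. }
  intros y hy.
  set (d := vadd y (vopp x)) in *.
  assert (ey : y = vadd x d) by (unfold d; symmetry; apply sub_add).
  pose proof (CS H n form J2 y x hs hf2) as c1.
  rewrite ey in c1 at 1. rewrite (g_addl H n form J2 _ _ _ hs hf2) in c1.
  assert (e1 : gJ H form J2 x x = a * a) by (symmetry; apply (N_sq H n form J2 x hs hf2)).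
  assert (e2 : gJ H form J2 d x = gJ H form J1 d w) by (unfold gJ; rewrite hw; reflexivity).
  pose proof (CS' H n form J1 d w hs hf1) as c2.
  fold a in c1. fold Nw in c2.
  set (Nd := normJ H form J1 d) in *.
  assert (hNd : 0 <= Nd) by apply N_pos.
  set (r := a*(a-k)/(Nw+1)) in *.
  assert (er : r * (Nw + 1) = a*(a-k)) by (unfold r; field; lra).
  assert (b1 : Nd * Nw <= r * Nw) by nra.
  assert (b2 : normJ H form J2 y * a > a * k) by nra.
  nra.
Qed.

Lemma ball H n form J1 J2 : is_sesquilinear H form ->
  is_fundamental_symmetry H n form J1 -> is_fundamental_symmetry H n form J2 ->
  (forall M, 0 < M -> exists x, M * normJ H form J1 x < normJ H form J2 x) ->
  forall c r k, 0 < r -> exists y, normJ H form J1 (vadd y (vopp c)) < r /\ k < normJ H form J2 y.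
Proof.
  intros hs hf1 hf2 hM c r k hr.
  set (M := 2 * (Rabs k + normJ H form J2 c + 1) / r).
  assert (hMp : 0 < M).
  { unfold M. pose proof (Rabs_pos k). pose proof (N_pos H form J2 c).
    apply Rdiv_lt_0_compat; lra. }
  destruct (hM M hMp) as [x hx].
  set (s := normJ H form J1 x) in *.
  assert (hs0 : 0 < s).
  { destruct (N_pos H form J1 x) as [p|z]; [exact p|].
    exfalso. assert (s0 : s = 0) by (symmetry; exact z). symmetry in z.
    apply (N_def H n form J1 x hs hf1) in z. rewrite s0 in hx.
    rewrite z, (N_0 H n form J2 hs hf2) in hx. lra. }
  set (t := r / (2*s)).
  assert (ht : 0 < t) by (unfold t; apply Rdiv_lt_0_compat; lra).
  exists (vadd c (rsc H t x)). rewrite add_sub. split.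
  - rewrite (N_scal H n form J1 t x hs hf1) by lra. fold s. unfold t. field_simplify; lra.
  - pose proof (N_tri H n form J2 (vadd c (rsc H t x)) (vopp c) hs hf2) as tr.
    rewrite add_sub, (N_opp H n form J2 c hs hf2), (N_scal H n form J2 t x hs hf2) in tr by lra.
    assert (t * (M * s) = Rabs k + normJ H form J2 c + 1) by (unfold t, M; field; lra).
    pose proof (Rle_abs k).
    assert (t * (M * s) < t * normJ H form J2 x) by (apply Rmult_lt_compat_l; lra).
    lra.
Qed.

Lemma step H n form J1 J2 : is_sesquilinear H form ->
  is_fundamental_symmetry H n form J1 -> is_fundamental_symmetry H n form J2 ->
  (forall M, 0 < M -> exists x, M * normJ H form J1 x < normJ H form J2 x) ->
  forall (c : H) (r k b : R), exists p : H * R, 0 < r -> 0 < b ->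
    0 < snd p /\ snd p <= b /\ normJ H form J1 (vadd (fst p) (vopp c)) + snd p < r /\
    forall z, normJ H form J1 (vadd z (vopp (fst p))) <= snd p -> k < normJ H form J2 z.
Proof.
  intros hs hf1 hf2 hM c r k b.
  destruct (Rlt_dec 0 r) as [hr|hr]; [|exists (c, r); intros; lra].
  destruct (ball H n form J1 J2 hs hf1 hf2 hM c r k hr) as (y & hy1 & hy2).
  destruct (lsc H n form J1 J2 hs hf1 hf2 y k hy2) as (r0 & hr0 & hl).
  destruct (Rlt_dec 0 b) as [hb|hb]; [|exists (c, r); intros; lra].
  set (d := normJ H form J1 (vadd y (vopp c))) in *.
  exists (y, Rmin (r0/2) (Rmin b ((r - d)/2))). intros _ _. simpl.
  pose proof (Rmin_l (r0/2) (Rmin b ((r - d)/2))).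
  pose proof (Rmin_r (r0/2) (Rmin b ((r - d)/2))).
  pose proof (Rmin_l b ((r - d)/2)). pose proof (Rmin_r b ((r - d)/2)).
  split; [apply Rmin_pos; [lra| apply Rmin_pos; lra]|].
  fold d. split; [lra|]. split; [lra|].
  intros z hz. apply hl. lra.
Qed.

Lemma bound H n form J1 J2 : is_sesquilinear H form ->
  is_fundamental_symmetry H n form J1 -> is_fundamental_symmetry H n form J2 ->
  exists C, 0 < C /\ forall x, normJ H form J2 x <= C * normJ H form J1 x.
Proof.
  intros hs hf1 hf2. apply NNPP. intro hneg.
  assert (hM : forall M, 0 < M -> exists x, M * normJ H form J1 x < normJ H form J2 x).
  { intros M hM. apply NNPP. intro hn. apply hneg. exists M. split; [exact hM|].
    intro x. apply Rnot_lt_le. intro h. apply hn. exists x. exact h. }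
  pose proof (step H n form J1 J2 hs hf1 hf2 hM) as ST.
  pose (F := fun c r k b => proj1_sig (constructive_indefinite_description _ (ST c r k b))).
  assert (FP : forall c r k b, 0 < r -> 0 < b ->
    0 < snd (F c r k b) /\ snd (F c r k b) <= b /\
    normJ H form J1 (vadd (fst (F c r k b)) (vopp c)) + snd (F c r k b) < r /\
    forall z, normJ H form J1 (vadd z (vopp (fst (F c r k b)))) <= snd (F c r k b) ->
      k < normJ H form J2 z).
  { intros c r k b hr hb. unfold F. destruct (constructive_indefinite_description _ _) as [p hp].
    simpl. apply hp; assumption. }
  pose (sq := fix sq (m : nat) : (H * R)%type := match m with
     | O => (vzero, 1) | S m => F (fst (sq m)) (snd (sq m)) (INR m) (/(INR m + 1)) end).
  assert (sqS : forall m, sq (S m) = F (fst (sq m)) (snd (sq m)) (INR m) (/(INR m + 1)))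
    by (intro; reflexivity).
  assert (ipos : forall m, 0 < /(INR m + 1)).
  { intro m. apply Rinv_0_lt_compat. pose proof (pos_INR m). lra. }
  assert (pos : forall m, 0 < snd (sq m)).
  { induction m. { simpl. lra. } rewrite sqS. apply FP; auto. }
  assert (FPm : forall m,
    0 < snd (sq (S m)) /\ snd (sq (S m)) <= /(INR m + 1) /\
    normJ H form J1 (vadd (fst (sq (S m))) (vopp (fst (sq m)))) + snd (sq (S m)) < snd (sq m) /\
    forall z, normJ H form J1 (vadd z (vopp (fst (sq (S m))))) <= snd (sq (S m)) ->
      INR m < normJ H form J2 z).
  { intro m. rewrite sqS. apply FP; auto. }
  clearbody sq.
  assert (cau : forall q p, normJ H form J1 (vadd (fst (sq (p + q)%nat)) (vopp (fst (sq q))))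
     + snd (sq (p + q)%nat) <= snd (sq q)).
  { intros q p. induction p.
    - simpl. rewrite vaddN, (N_0 H n form J1 hs hf1). lra.
    - change (S p + q)%nat with (S (p + q)).
      pose proof (N_tri3 H n form J1 (fst (sq (S (p + q)))) (fst (sq q)) (fst (sq (p+q)%nat)) hs hf1).
      destruct (FPm (p + q)%nat) as (_ & _ & h3 & _). lra. }
  assert (mono : forall q p, snd (sq (p + q)%nat) <= snd (sq q)).
  { intros q p. pose proof (cau q p). pose proof (N_pos H form J1 (vadd (fst (sq (p + q)%nat)) (vopp (fst (sq q))))). lra. }
  assert (gen : forall eps, 0 < eps -> exists N, forall p, (N <= p)%nat -> snd (sq p) < eps).
  { intros eps he. destruct (nat_unbounded (/eps)) as [N hN]. exists (S N). intros p hp.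
    replace p with ((p - S N) + S N)%nat by lia.
    pose proof (mono (S N) (p - S N)%nat). destruct (FPm N) as (_ & h2 & _).
    assert (/ (INR N + 1) < eps).
    { rewrite <- (Rinv_inv eps). apply Rinv_lt_contravar.
      - apply Rmult_lt_0_compat; [apply Rinv_0_lt_compat; lra|]. pose proof (pos_INR N). lra.
      - lra. }
    lra. }
  assert (hcomp : completeJ H form J1) by (destruct hf1 as (_ & _ & _ & _ & _ & _ & hc); exact hc).
  destruct (hcomp (fun m => fst (sq m))) as [l hl].
  { intros eps he. destruct (gen eps he) as [N hN]. exists N. intros p q hp hq. unfold distJ.
    destruct (le_ge_dec p q) as [pq|pq].
    - rewrite (N_swap H n form J1 _ _ hs hf1).
      destruct (Nat.le_exists_sub p q pq) as [k [-> _]]. pose proof (cau p k).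
      pose proof (hN p hp). pose proof (pos (k+p)%nat). lra.
    - destruct (Nat.le_exists_sub q p pq) as [k [-> _]]. pose proof (cau q k).
      pose proof (hN q hq). pose proof (pos (k+q)%nat). lra. }
  assert (inball : forall m, normJ H form J1 (vadd l (vopp (fst (sq (S m))))) <= snd (sq (S m))).
  { intro m. destruct (Rle_dec (normJ H form J1 (vadd l (vopp (fst (sq (S m)))))) (snd (sq (S m)))) as [ok|ko];
      [exact ok|exfalso].
    apply Rnot_le_lt in ko.
    set (A := normJ H form J1 (vadd l (vopp (fst (sq (S m)))))) in *.
    destruct (hl ((A - snd (sq (S m)))/2)) as [N hN]; [lra|].
    specialize (hN (N + S m)%nat ltac:(lia)). unfold distJ in hN.
    rewrite (N_swap H n form J1 _ _ hs hf1) in hN.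
    pose proof (N_tri3 H n form J1 l (fst (sq (S m))) (fst (sq (N + S m)%nat)) hs hf1).
    pose proof (cau (S m) N). pose proof (pos (N + S m)%nat). fold A in H0. lra. }
  destruct (nat_unbounded (normJ H form J2 l)) as [m hm].
  destruct (FPm m) as (_ & _ & _ & h4). specialize (h4 l (inball m)). lra.
Qed.

Lemma lt_bound (a b C e : R) : 0 < C -> a <= C * b -> b < e / C -> a < e.
Proof.
  intros hC h1 h2. assert (C * b < C * (e / C)) by (apply Rmult_lt_compat_l; assumption).
  assert (C * (e / C) = e) by (field; lra). lra.
Qed.

Theorem mainTheorem1 (H : GradedCVS) (n : bool) (form : H -> H -> Cx)
    (J1 J2 : H -> H) :
  is_Hilbert_superspace H n form ->
  is_fundamental_symmetry H n form J1 ->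
  is_fundamental_symmetry H n form J2 ->
  (forall U : H -> Prop, is_openJ H form J1 U <-> is_openJ H form J2 U) /\
  (forall T : H -> H, is_linear H T ->
     (continuousJ H form J1 T <-> continuousJ H form J2 T)).
Proof.
  intros (hs & _ & _ & _) hf1 hf2.
  destruct (bound H n form J1 J2 hs hf1 hf2) as (C12 & hC12 & b12).
  destruct (bound H n form J2 J1 hs hf2 hf1) as (C21 & hC21 & b21).
  split.
  - intros U; split; intros hU x hx; destruct (hU x hx) as (eps & he & hy).
    + exists (eps / C21). split; [apply Rdiv_lt_0_compat; assumption|].
      intros y hy'. apply hy. unfold distJ in *. eapply lt_bound; [exact hC21 | apply b21 | exact hy'].
    + exists (eps / C12). split; [apply Rdiv_lt_0_compat; assumption|].
      intros y hy'. apply hy. unfold distJ in *. eapply lt_bound; [exact hC12 | apply b12 | exact hy'].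
  - intros T _; split; intros hc x eps he.
    + destruct (hc x (eps / C12)) as (d & hd & hT); [apply Rdiv_lt_0_compat; assumption|].
      exists (d / C21). split; [apply Rdiv_lt_0_compat; assumption|].
      intros y hy. unfold distJ in *. eapply lt_bound; [exact hC12| apply b12 |].
      apply hT. eapply lt_bound; [exact hC21 | apply b21 | exact hy].
    + destruct (hc x (eps / C21)) as (d & hd & hT); [apply Rdiv_lt_0_compat; assumption|].
      exists (d / C12). split; [apply Rdiv_lt_0_compat; assumption|].
      intros y hy. unfold distJ in *. eapply lt_bound; [exact hC21| apply b21 |].
      apply hT. eapply lt_bound; [exact hC12 | apply b12 | exact hy].
Qed.
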